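(* Let $G=(V,E)$ with $|V|=n$. Assume that there is $\alpha>0$ such that $d(v)\ge\alpha n$ for all $v\in V$ and $e(W,V\setminus W)\ge\alpha|W||V\setminus W|$ for all $W\subseteq V$. Then for all $u,w\in V$ there is $1\le d\le 8/\alpha^2+2$ such that there are at least $(\alpha^4/64)^{d+1}n^{d-1}$ paths of length $d$ from $u$ to $w$.
   Context: $d(v)$ is the degree of $v$; $e(U,W)$ is the number of edges with one endpoint in $U$ and the other in $W$; the length of a path is its number of edges. *)

(* Defs.v *)
From mathcomp Require Import all_boot all_order all_algebra.
Set Implicit Arguments. Unset Strict Implicit. Unset Printing Implicit Defensive.

Section Graph.
Variables (T : finType) (e : rel T).

Definition simple_graph : Prop := symmetric e /\ irreflexive e.

Definition deg (v : T) : nat := #|[set y | e v y]|.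

(* e(U,W): number of edges with one endpoint in U and the other in W
   (for disjoint U, W this is the number of ordered pairs (x,y), x in U, y in W, xy an edge) *)
Definition e_between (U W : {set T}) : nat :=
  #|[set p : T * T | [&& p.1 \in U, p.2 \in W & e p.1 p.2]]|.

(* walks of length d (d edges, d+1 vertices) from u to w, as vertex sequences
   f 0, f 1, ..., f d with consecutive vertices adjacent *)
Definition walks (d : nat) (u w : T) : {set {ffun 'I_d.+1 -> T}} :=
  [set f : {ffun 'I_d.+1 -> T} |
     [&& f ord0 == u, f ord_max == w &
         [forall i : 'I_d, e (f (widen_ord (leqnSn d) i)) (f (lift ord0 i))]]].

End Graph.

(* Main.v *)
Require Import Defs.
From mathcomp Require Import all_boot all_order all_algebra.
From mathcomp Require Import ring lra.
Set Implicit Arguments. Unset Strict Implicit.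
Import Order.TTheory GRing.Theory Num.Theory.
Section Comb.
Variables (T : finType) (e : rel T).

Lemma walk0 (u : T) : 1 <= #|walks e 0 u u|.
Proof.
apply/card_gt0P; exists [ffun=> u]; rewrite inE !ffunE !eqxx /=.
by apply/forallP => -[].
Qed.

Lemma walkS (k : nat) (u y : T) :
  \sum_x (e x y) * #|walks e k u x| <= #|walks e k.+1 u y|.
Proof.
pose S := [set p : T * {ffun 'I_k.+1 -> T} | e p.1 y && (p.2 \in walks e k u p.1)].
have cS : #|S| = \sum_x (e x y) * #|walks e k u x|.
  rewrite -sum1_card big_mkcond /=.
  transitivity (\sum_x \sum_f (if (x, f) \in S then 1 else 0)).
    by rewrite pair_big /=; apply: eq_bigr => -[x f].
  apply: eq_bigr => x _.
  case exy: (e x y); last by rewrite mul0n big1 // => f _; rewrite inE exy.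
  rewrite mul1n -sum1_card [in RHS]big_mkcond; apply: eq_bigr => f _.
  by rewrite inE exy.
pose ext (p : T * {ffun 'I_k.+1 -> T}) : {ffun 'I_k.+2 -> T} :=
  [ffun i : 'I_k.+2 => if (i : nat) <= k then p.2 (inord i) else y].
rewrite -cS -(card_in_imset (f := ext)); last first.
  move=> [x1 f1] [x2 f2]; rewrite !inE /= => /andP[_ H1] /andP[_ H2] E.
  have Ef : f1 = f2.
    apply/ffunP => i.
    have := congr1 (fun g : {ffun 'I_k.+2 -> T} => g (widen_ord (leqnSn _) i)) E.
    by rewrite /ext !ffunE /= -ltnS ltn_ord inord_val.
  move: H1 H2; rewrite -Ef => /and3P[_ /eqP <- _] /and3P[_ /eqP <- _].
  done.
apply: subset_leq_card; apply/subsetP => g /imsetP[[x f]].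
rewrite inE /= => /andP[exy]; rewrite inE => /and3P[/eqP f0 /eqP fm /forallP fw] ->.
rewrite inE; apply/and3P; split.
- by rewrite /ext ffunE /=; apply/eqP; rewrite -f0; congr (f _); apply: val_inj; rewrite /= inordK.
- by rewrite /ext ffunE /= ltnn.
apply/forallP => i; rewrite /ext !ffunE /=.
rewrite /bump leq0n add1n.
have -> : (i <= k)%N by rewrite -ltnS ltn_ord.
case: (ltnP i k) => hik.
  have := fw (Ordinal hik).
  have -> : widen_ord (leqnSn k) (Ordinal hik) = inord i.
    by apply: val_inj; rewrite /= inordK // ltnS ltnW.
  have -> : lift ord0 (Ordinal hik) = inord i.+1 :> 'I_k.+1.
    by apply: val_inj; rewrite /= inordK.
  done.
have ik : (i : nat) = k by apply/eqP; rewrite eqn_leq hik -ltnS ltn_ord.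
rewrite ik.
have -> : inord k = ord_max :> 'I_k.+1 by apply: val_inj; rewrite /= inordK.
by rewrite fm.
Qed.

End Comb.

Section NB.
Variables (T : finType) (e : rel T).
Hypothesis esym : symmetric e.

Definition nb (A : {set T}) y : nat := (\sum_(x in A) e x y)%N.

Lemma sum_subU (f : T -> nat) (A B : {set T}) :
  (\sum_(x in A :|: B) f x <= \sum_(x in A) f x + \sum_(x in B) f x)%N.
Proof.
rewrite !(big_mkcond (fun x => x \in _)) -big_split /=; apply: leq_sum => x _.
rewrite inE; case: (x \in A); case: (x \in B) => //=; exact: leq_addr.
Qed.

Lemma sum_sub (f : T -> nat) (A B : {set T}) : A \subset B ->
  (\sum_(x in A) f x <= \sum_(x in B) f x)%N.
Proof.
move/subsetP=> AB; rewrite !(big_mkcond (fun x => x \in _)) /=; apply: leq_sum => x _.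
by case xA: (x \in A); rewrite ?(AB _ xA).
Qed.

Lemma nbU (A B : {set T}) y : (nb (A :|: B) y <= nb A y + nb B y)%N.
Proof. exact: sum_subU. Qed.

Lemma nb_sub (A B : {set T}) y : A \subset B -> (nb A y <= nb B y)%N.
Proof. exact: sum_sub. Qed.

Lemma nb_le (A : {set T}) y : (nb A y <= #|T|)%N.
Proof.
apply: (@leq_trans (\sum_(x in A) 1)%N); first by apply: leq_sum => x _; case: (e x y).
by rewrite sum1_card max_card.
Qed.

Lemma nb_card (A : {set T}) y : (nb A y <= #|A|)%N.
Proof.
rewrite -sum1_card; by apply: leq_sum => x _; case: (e x y).
Qed.

Lemma nbC (A : {set T}) y : (nb A y + nb (~: A) y)%N = deg e y.
Proof.
rewrite /nb /deg -sum1_card !(big_mkcond (fun x => x \in _)) -big_split /=.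
apply: eq_bigr => x _; rewrite !inE esym.
by case: (x \in A); case: (e y x).
Qed.

Lemma ebet (A B : {set T}) : e_between e A B = (\sum_(y in B) nb A y)%N.
Proof.
rewrite /e_between -sum1_card big_mkcond /=.
transitivity (\sum_x \sum_y (if (x \in A) && (y \in B) && e x y then 1 else 0))%N.
  rewrite pair_big /=; apply: eq_bigr => -[x y] _; by rewrite inE /= andbA.
rewrite exchange_big /= [RHS]big_mkcond /=; apply: eq_bigr => y _.
case yB: (y \in B); last by rewrite big1 // => x _; rewrite andbF.
rewrite /nb [RHS]big_mkcond /=; apply: eq_bigr => x _.
by case: (x \in A); case: (e x y).
Qed.

Lemma dswap (A B : {set T}) : (\sum_(y in B) nb A y)%N = (\sum_(x in A) nb B x)%N.
Proof.
rewrite /nb exchange_big /=; apply: eq_bigr => x _; apply: eq_bigr => y _.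
by rewrite esym.
Qed.

Lemma sum_ind (P B : {set T}) : (\sum_(y in P) (y \in B : nat) <= #|B|)%N.
Proof.
rewrite -sum1_card !(big_mkcond (fun x => x \in _)) /=; apply: leq_sum => y _.
by case: (y \in P); case: (y \in B).
Qed.

Lemma deg_le v : (deg e v <= #|T|)%N.
Proof. exact: max_card. Qed.

End NB.

Local Open Scope ring_scope.

Section Main.
Variables (R : realFieldType) (T : finType) (e : rel T) (alpha : R) (u : T).
Hypothesis esym : symmetric e.
Hypothesis a0 : 0 < alpha.
Hypothesis hdeg : forall v : T, alpha * #|T|%:R <= (deg e v)%:R.
Hypothesis hcut : forall W : {set T},
      alpha * #|W|%:R * #|~: W|%:R <= (e_between e W (~: W))%:R.

Let N : R := #|T|%:R.

Lemma N0 : 0 < N.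
Proof. by rewrite /N ltr0n; apply/card_gt0P; exists u. Qed.

Lemma a1 : alpha <= 1.
Proof.
have h := hdeg u.
have : (deg e u)%:R <= N :> R by rewrite /N ler_nat deg_le.
move=> h2; have h3 : alpha * N <= 1 * N by rewrite mul1r; exact: le_trans h h2.
by rewrite ler_pM2r ?N0 in h3.
Qed.

Let gam : R := alpha ^+ 3 / 32.
Definition thr (j : nat) : R := (gam * N) ^+ j / N.
Definition A j : {set T} := [set x | thr j <= (#|walks e j u x|)%:R].
Definition U j : {set T} := A j :|: A j.+1.

Lemma gam0 : 0 <= gam.
Proof. rewrite /gam; apply: divr_ge0 => //; apply: exprn_ge0; exact: ltW. Qed.

Lemma thr0 j : 0 <= thr j.
Proof. rewrite /thr; apply: divr_ge0; [apply: exprn_ge0; apply: mulr_ge0; [exact: gam0|exact: ltW N0]|exact: ltW N0]. Qed.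

Lemma nbthr i y : (nb e (A i) y)%:R * thr i <= (#|walks e i.+1 u y|)%:R.
Proof.
have h := walkS e i u y.
apply: le_trans (_ : ((\sum_x e x y * #|walks e i u x|)%N)%:R <= _); last by rewrite ler_nat.
apply: le_trans (_ : ((\sum_(x in A i) e x y * #|walks e i u x|)%N)%:R <= _); last first.
  rewrite ler_nat; rewrite [X in (_ <= X)%N](bigID (fun x => x \in A i)) /=; exact: leq_addr.
rewrite /nb !natr_sum mulr_suml; apply: ler_sum => x; rewrite inE => hx.
rewrite natrM; apply: ler_wpM2l => //.
Qed.

Lemma GammaA j y : gam * N <= (nb e (A j) y)%:R -> y \in A j.+1.
Proof.
move=> h; rewrite inE; apply: le_trans (nbthr j y).
have -> : thr j.+1 = gam * N * thr j by rewrite /thr exprS mulrA.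
by apply: ler_wpM2r => //; exact: thr0.
Qed.


Lemma notGamma j y : y \notin A j.+1 -> (nb e (A j) y)%:R <= gam * N.
Proof.
move=> yn; rewrite leNgt; apply/negP => /ltW /GammaA; by rewrite (negbTE yn).
Qed.

Lemma loss j : (#|A j :\: A j.+2|)%:R * ((alpha - gam) * N) <= gam * N * N.
Proof.
set L := A j :\: A j.+2; set C := ~: A j.+1.
have key := dswap esym L C.
have up : ((\sum_(y in C) nb e L y)%N)%:R <= gam * N * N.
  rewrite natr_sum; apply: le_trans (_ : \sum_(y in C) gam * N <= _).
    apply: ler_sum => y; rewrite inE => yC.
    apply: le_trans (_ : (nb e (A j) y)%:R <= _); first by rewrite ler_nat nb_sub // subsetDl.
    exact: notGamma.
  rewrite sumr_const -mulr_natr; apply: ler_wpM2l.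
    by apply: mulr_ge0; [exact: gam0|exact: ltW N0].
  by rewrite /N ler_nat max_card.
apply: le_trans up; rewrite key.
rewrite mulrC mulr_natr -sumr_const natr_sum; apply: ler_sum => x.
rewrite in_setD => /andP[xn2 xj].
have h1 := nbC esym (A j.+1) x.
have h2 := notGamma xn2.
have h3 := hdeg x.
have h4 : (nb e (A j.+1) x)%:R + (nb e C x)%:R = (deg e x)%:R :> R by rewrite -natrD h1.
rewrite -/N in h3; lra.
Qed.


Lemma growth j : alpha * #|U j|%:R * #|~: U j|%:R - 2 * gam * N * #|~: U j|%:R
   <= (#|U j.+1 :\: U j|)%:R * N.
Proof.
set Uj := U j; set New := U j.+1 :\: Uj; set Cc := ~: Uj.
have h := hcut Uj; rewrite ebet natr_sum in h.
have per : forall y, y \in Cc -> (nb e Uj y)%:R <= 2 * gam * N + (y \in New)%:R * N.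
  move=> y; rewrite in_setC => yU.
  have yA1 : y \notin A j.+1.
    by apply: contra yU => yA; rewrite /Uj /U in_setU yA orbT.
  have h1 := notGamma yA1.
  have h2 : (nb e (A j.+1) y)%:R <= gam * N + (y \in New)%:R * N.
    case yN: (y \in New).
      rewrite mul1r; have : (nb e (A j.+1) y)%:R <= N by rewrite /N ler_nat nb_le.
      have := gam0; have := N0; move=> *; nra.
    rewrite mul0r addr0; apply: notGamma.
    apply: contraFN yN => yA2; rewrite /New in_setD yU /U in_setU yA2 orbT.
    done.
  have h3 := nbU e (A j) (A j.+1) y.
  have h4 : (nb e Uj y)%:R <= (nb e (A j) y)%:R + (nb e (A j.+1) y)%:R :> R.
    by rewrite -natrD ler_nat.
  lra.
have hs := @ler_sum _ _ (index_enum T) (fun y => y \in Cc) _ _ per.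
rewrite big_split /= sumr_const -mulr_suml in hs.
have hi : \sum_(y in Cc) (y \in New)%:R <= #|New|%:R :> R.
  by rewrite -natr_sum ler_nat sum_ind.
have : 0 <= N := ltW N0.
rewrite -mulr_natr in hs.
move=> N0'.
have hh : (\sum_(y in Cc) (y \in New)%:R) * N <= #|New|%:R * N :> R.
  by apply: ler_wpM2r.
lra.
Qed.


Lemma stepU j : alpha * N <= #|U j|%:R -> #|U j|%:R < (1 - alpha / 2) * N ->
  #|U j|%:R + alpha ^+ 2 * N / 8 <= #|U j.+1|%:R.
Proof.
move=> hlo hhi.
have hc := cardsC (U j).
have hcR : #|U j|%:R + #|~: U j|%:R = N :> R by rewrite -natrD hc.
have hID1 := cardsID (U j.+1) (U j).
have hID2 := cardsID (U j) (U j.+1).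
rewrite setIC in hID2.
have hl : (#|U j :\: U j.+1| <= #|A j :\: A j.+2|)%N.
  apply: subset_leq_card; apply/subsetP => x; rewrite !in_setD /U !in_setU.
  case: (x \in A j); case: (x \in A j.+1); case: (x \in A j.+2) => //.
have hnat : (#|U j.+1| + #|U j :\: U j.+1| = #|U j| + #|U j.+1 :\: U j|)%N.
  by rewrite -hID1 -hID2; ring.
have hR : #|U j.+1|%:R + #|U j :\: U j.+1|%:R = #|U j|%:R + #|U j.+1 :\: U j|%:R :> R.
  by rewrite -!natrD hnat.
have hlR : #|U j :\: U j.+1|%:R <= #|A j :\: A j.+2|%:R :> R by rewrite ler_nat.
have hloss := loss j.
have hgr := growth j.
move: hR hlR hloss hgr hcR hlo hhi.
set u0 := (#|U j|%:R : R); set c0 := (#|~: U j|%:R : R); set l := (#|U j :\: U j.+1|%:R : R).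
set l' := (#|A j :\: A j.+2|%:R : R); set m := (#|U j.+1 :\: U j|%:R : R).
set u1 := (#|U j.+1|%:R : R).
move=> hR hlR hloss hgr hcR hlo hhi.
have Np := N0.
have al1 := a1.
have l'0 : 0 <= l' by rewrite /l' ler0n.
have c00 : 0 <= c0 by rewrite /c0 ler0n.
have u00 : 0 <= u0 by rewrite /u0 ler0n.
have g0 := gam0.
have gdef : gam = alpha ^+ 3 / 32 by [].
have a3 : alpha ^+ 3 <= alpha.
  rewrite -[X in _ <= X]expr1; apply: ler_wiXn2l => //; exact: ltW.
have a4 : alpha ^+ 4 <= alpha ^+ 3.
  apply: ler_wiXn2l => //; exact: ltW.
have e4 : alpha ^+ 4 = alpha * alpha ^+ 3 by rewrite exprS.
have e3 : alpha ^+ 3 = alpha * alpha ^+ 2 by rewrite exprS.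
have gle : gam <= alpha / 2 by rewrite gdef; lra.
have sA : l' * (alpha - gam) <= gam * N.
  by rewrite -(ler_pM2r Np) -mulrA.
have sB : l' * alpha <= 2 * gam * N by nra.
have sC : alpha * N ^+ 2 / 4 <= u0 * c0.
  rewrite expr2.
  case: (lerP (N / 2) u0) => hu.
    have : 0 <= (u0 - N / 2) * (c0 - alpha * N / 2) by apply: mulr_ge0; lra.
    have : 0 <= (u0 - N / 2) * (alpha * N) by apply: mulr_ge0; [lra|apply: mulr_ge0; lra].
    have : 0 <= N * (c0 - alpha * N / 2) by apply: mulr_ge0; lra.
    have : 0 <= alpha * N * N by apply: mulr_ge0; [apply: mulr_ge0; lra|lra].
    nra.
  have : 0 <= (u0 - alpha * N) * (c0 - N / 2) by apply: mulr_ge0; lra.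
  have : 0 <= (u0 - alpha * N) * N by apply: mulr_ge0; lra.
  have : 0 <= (alpha * N) * (c0 - N / 2) by apply: mulr_ge0; [apply: mulr_ge0; lra|lra].
  have : 0 <= alpha * N * N by apply: mulr_ge0; [apply: mulr_ge0; lra|lra].
  nra.
have sD : m * N >= (alpha ^+ 2 / 4 - 2 * gam) * N * N.
  have h1 : alpha * (alpha * N ^+ 2 / 4) <= alpha * (u0 * c0) by apply: ler_wpM2l => //; exact: ltW.
  have h2 : 2 * gam * N * c0 <= 2 * gam * N * N.
    apply: ler_wpM2l; first by nra.
    lra.
  rewrite expr2 in h1 e3 e4 *.
  nra.
have sD' : m >= (alpha ^+ 2 / 4 - 2 * gam) * N by rewrite -(ler_pM2r Np).
have sE : alpha * (alpha ^+ 2 * N / 8) <= alpha * (m - l).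
  have h1 : alpha * m >= alpha * ((alpha ^+ 2 / 4 - 2 * gam) * N).
    by apply: ler_wpM2l => //; exact: ltW.
  have h2 : alpha * l <= alpha * l' by apply: ler_wpM2l => //; exact: ltW.
  have h3 : alpha ^+ 4 * N <= alpha ^+ 3 * N by apply: ler_wpM2r => //; exact: ltW.
  rewrite gdef in h1 sB.
  nra.
rewrite ler_pM2l // in sE.
lra.
Qed.


Lemma final_count i w : alpha * N / 4 <= (nb e (A i) w)%:R ->
  (alpha ^+ 4 / 64) ^+ i.+2 * N ^+ i <= (#|walks e i.+1 u w|)%:R.
Proof.
move=> h; apply: le_trans (nbthr i w).
have Np := N0.
have al1 := a1.
have t0 := thr0 i.
apply: le_trans (_ : alpha * N / 4 * thr i <= _); last exact: ler_wpM2r.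
have -> : alpha * N / 4 * thr i = alpha / 4 * (gam ^+ i * N ^+ i).
  rewrite /thr exprMn; field; exact: lt0r_neq0.
set c := alpha ^+ 4 / 64.
have -> : c ^+ i.+2 * N ^+ i = c ^+ i * (c * c) * N ^+ i by rewrite !exprS; ring.
have -> : alpha / 4 * (gam ^+ i * N ^+ i) = gam ^+ i * (alpha / 4) * N ^+ i by ring.
have c0 : 0 <= c by apply: divr_ge0 => //; apply: exprn_ge0; exact: ltW.
have cg : c <= gam.
  rewrite /gam /c.
  have : alpha ^+ 4 <= alpha ^+ 3 by apply: ler_wiXn2l => //; exact: ltW.
  have : 0 <= alpha ^+ 4 by apply: exprn_ge0; exact: ltW.
  lra.
have c2 : c * c <= alpha / 4.
  have : alpha ^+ 4 <= alpha by rewrite -[X in _ <= X]expr1; apply: ler_wiXn2l => //; exact: ltW.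
  have : alpha ^+ 4 <= 1 by apply: exprn_ile1; [exact: ltW | exact: a1].
  have : 0 <= alpha ^+ 4 by apply: exprn_ge0; exact: ltW.
  rewrite /c => h1 h2 h3; nra.
have hi : c ^+ i <= gam ^+ i by apply: lerXn2r => //; rewrite nnegrE //; exact: gam0.
have Ni : 0 <= N ^+ i by apply: exprn_ge0; exact: ltW.
apply: ler_wpM2r => //.
apply: ler_pM => //; [exact: exprn_ge0 | exact: mulr_ge0].
Qed.


Lemma baseU : alpha * N <= #|U 0|%:R.
Proof.
apply: le_trans (hdeg u) _; rewrite ler_nat /deg; apply: subset_leq_card.
apply/subsetP => y; rewrite inE => euy.
rewrite /U in_setU; apply/orP; right; rewrite inE.
have h := walkS e 0 u y.
have h0 := walk0 e u.
have h1 : (1 <= \sum_x e x y * #|walks e 0 u x|)%N.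
  rewrite (bigD1 u) //= euy mul1n; exact: leq_trans h0 (leq_addr _ _).
have h2 : (1 <= #|walks e 1 u y|)%N := leq_trans h1 h.
apply: le_trans (_ : 1 <= _); last by rewrite ler1n.
rewrite /thr expr1 mulfK; last exact: lt0r_neq0 N0.
rewrite /gam; have := a1; have : 0 <= alpha ^+ 3 by apply: exprn_ge0; exact: ltW.
have : alpha ^+ 3 <= 1 by apply: exprn_ile1; [exact: ltW | exact: a1].
lra.
Qed.

Lemma iterU k : (forall j, (j < k)%N -> #|U j|%:R < (1 - alpha / 2) * N) ->
  alpha * N + k%:R * (alpha ^+ 2 * N / 8) <= #|U k|%:R /\ (k <= #|U k|)%N.
Proof.
elim: k => [|k IH] H.
  by rewrite mul0r addr0 baseU.
have [IH1 IH2] : alpha * N + k%:R * (alpha ^+ 2 * N / 8) <= #|U k|%:R /\ (k <= #|U k|)%N.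
  by apply: IH => j hj; apply: H; exact: ltnW.
have p0 : 0 <= k%:R * (alpha ^+ 2 * N / 8).
  apply: mulr_ge0 => //; apply: divr_ge0 => //; apply: mulr_ge0; [apply: exprn_ge0; exact: ltW|exact: ltW N0].
have hs := stepU (ltac:(lra) : alpha * N <= #|U k|%:R) (H k (ltnSn k)).
have p1 : 0 < alpha ^+ 2 * N / 8.
  apply: divr_gt0 => //; apply: mulr_gt0; [apply: exprn_gt0 => //|exact: N0].
split.
  rewrite -natr1 mulrDl mul1r; lra.
have : #|U k|%:R < #|U k.+1|%:R :> R by lra.
rewrite ltr_nat => hlt; exact: leq_ltn_trans IH2 hlt.
Qed.

Lemma main_u w : exists d : nat,
    [/\ (1 <= d)%N, d%:R <= 8 / alpha ^+ 2 + 2 &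
        (alpha ^+ 4 / 64) ^+ d.+1 * N ^+ d.-1 <= #|walks e d u w|%:R].
Proof.
pose P k := ~~ (#|U k|%:R < (1 - alpha / 2) * N).
have ex : exists k, P k.
  case: (boolP [exists k : 'I_(#|T|.+2), P k]) => [/existsP [k Pk]|/existsPn H].
    by exists k.
  have := iterU (k := #|T|.+1) (fun j hj => negbNE (H (Ordinal (ltn_trans hj (ltnSn _))))).
  case=> _ h; have := max_card (mem (U #|T|.+1)).
  by rewrite leqNgt (leq_trans (ltnSn _) h).
case: (ex_minnP ex) => k Pk kmin.
have hprev : forall j, (j < k)%N -> #|U j|%:R < (1 - alpha / 2) * N.
  move=> j hj; apply/negPn/negP => Pj; have := kmin j Pj; by rewrite leqNgt hj.
have [hk1 _] := iterU hprev.
have Np := N0.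
have al1 := a1.
have hUk : #|U k|%:R <= N by rewrite /N ler_nat max_card.
have kb : k%:R <= 8 / alpha ^+ 2.
  have a2 : 0 < alpha ^+ 2 by apply: exprn_gt0.
  rewrite ler_pdivlMr //.
  have aN : 0 <= alpha * N := mulr_ge0 (ltW a0) (ltW Np).
  have : k%:R * (alpha ^+ 2 * N / 8) <= N by lra.
  have k0 : 0 <= k%:R :> R by rewrite ler0n.
  move=> h; have : k%:R * alpha ^+ 2 * N <= 8 * N by lra.
  by rewrite ler_pM2r //; lra.
rewrite /P -leNgt in Pk.
have hC := nbC esym (U k) w.
have hU := nbU e (A k) (A k.+1) w.
have hCc : (nb e (~: U k) w <= #|~: U k|)%N := nb_card e _ _.
have hcc := cardsC (U k).
have hdw := hdeg w.
have hsum : alpha * N / 2 <= (nb e (A k) w)%:R + (nb e (A k.+1) w)%:R.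
  have e1 : (nb e (U k) w)%:R + (nb e (~: U k) w)%:R = (deg e w)%:R :> R by rewrite -natrD hC.
  have e2 : (nb e (U k) w)%:R <= (nb e (A k) w)%:R + (nb e (A k.+1) w)%:R :> R by rewrite -natrD ler_nat.
  have e3 : (nb e (~: U k) w)%:R <= #|~: U k|%:R :> R by rewrite ler_nat.
  have e4 : #|U k|%:R + #|~: U k|%:R = N :> R by rewrite -natrD hcc.
  rewrite -/N in hdw; lra.
have a2 : 0 < alpha ^+ 2 by apply: exprn_gt0.
have k2 : 2 <= 8 / alpha ^+ 2.
  rewrite ler_pdivlMr //.
  have : alpha ^+ 2 <= 1 by apply: exprn_ile1; [exact: ltW | exact: a1].
  lra.
case: (lerP (alpha * N / 4) (nb e (A k) w)%:R) => hi.
  exists k.+1; split => //.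
    rewrite -natr1; lra.
  exact: final_count.
exists k.+2; split => //.
  rewrite -natr1 -natr1; lra.
apply: final_count; lra.
Qed.

End Main.

Theorem lemma2p11 (R : realFieldType) (T : finType) (e : rel T) (alpha : R) :
  simple_graph e ->
  0 < alpha ->
  (forall v : T, alpha * #|T|%:R <= (deg e v)%:R) ->
  (forall W : {set T},
      alpha * #|W|%:R * #|~: W|%:R <= (e_between e W (~: W))%:R) ->
  forall u w : T, exists d : nat,
    [/\ (1 <= d)%N, d%:R <= 8 / alpha ^+ 2 + 2 &
        (alpha ^+ 4 / 64) ^+ d.+1 * #|T|%:R ^+ d.-1 <= #|walks e d u w|%:R].
Proof.
move=> [esym _] a0 hdeg hcut u w.
exact: (main_u u esym a0 hdeg hcut w).
Qed.
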